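(* Under the mixed membership model $\mathbb{E}\mathbf{X}=\mathbf{H}=\theta\mathbf{\Pi}\mathbf{P}\mathbf{\Pi}^T$, assume there exist constants $0<c_0,c_1<1$ such that $\lambda_K(\mathbf{\Pi}^T\mathbf{\Pi})\ge c_0 n$, $\lambda_K(\mathbf{P})\ge c_0$, and $\theta\ge n^{-c_1}$. Then $$\alpha_n^2\le n\theta,\qquad d_k\sim n\theta,\quad k=1,\cdots,K.$$ Under the degree-corrected mixed membership model $\mathbf{H}=\mathbf{\Theta}\mathbf{\Pi}\mathbf{P}\mathbf{\Pi}^T\mathbf{\Theta}$, assume there exist constants $c_2,c_3\in(0,1)$ and $c_4>0$ such that $\min_{1\le k\le K}|\mathcal{N}_k|\ge c_2 n$, $\theta_{\max}\le c_4\theta_{\min}$, and $\theta_{\min}^2\ge n^{-c_3}$. Then similarly $$\alpha_n^2\le n\theta_{\max}^2,\qquad d_k\sim n\theta_{\max}^2,\quad k=1,\cdots,K.$$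
   Context: An undirected network on $n$ nodes has symmetric adjacency matrix $\mathbf{X}=\mathbf{H}+\mathbf{W}$, where the upper-triangular (including diagonal) entries of $\mathbf{X}$ are independent Bernoulli variables, $\mathbf{H}$ is the deterministic mean (probability) matrix of rank $K$ (fixed), and $\mathbf{W}=(w_{ij})$ is a symmetric noise matrix with independent entries on and above the diagonal. Let $\alpha_n=\{\max_{1\le j\le n}\sum_{i=1}^n\mathrm{var}(w_{ij})\}^{1/2}$. Write the eigendecomposition $\mathbf{H}=\mathbf{V}\mathbf{D}\mathbf{V}^T$ with $\mathbf{D}=\mathrm{diag}(d_1,\cdots,d_K)$, $|d_1|\ge\cdots\ge|d_K|>0$. Here $\mathbf{\Pi}=(\boldsymbol{\pi}_1,\cdots,\boldsymbol{\pi}_n)^T\in\mathbb{R}^{n\times K}$ has rows $\boldsymbol{\pi}_i$ that are community membership probability vectors (nonnegative entries summing to one), $\mathbf{P}=(p_{kl})\in\mathbb{R}^{K\times K}$ is nonsingular with entries in $[0,1]$, $\theta>0$ (possibly depending on $n$), $\mathbf{\Theta}=\mathrm{diag}(\theta_1,\cdots,\theta_n)$ with $\theta_i>0$ the degree heterogeneity parameters, $\theta_{\max}=\max_i\theta_i$, $\theta_{\min}=\min_i\theta_i$, and $\mathcal{N}_k=\{i:\boldsymbol{\pi}_i(k)=1\}$ is the set of pure nodes of community $k$. $\lambda_K(\cdot)$ denotes the $K$th largest eigenvalue; $a\sim b$ means same asymptotic order. *)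

(* Defs.v *)
From HB Require Import structures.
From mathcomp Require Import all_boot all_order all_algebra.
From mathcomp Require Import all_classical all_reals all_analysis.
Set Implicit Arguments. Unset Strict Implicit. Unset Printing Implicit Defensive.
Import Order.TTheory GRing.Theory Num.Theory.
Local Open Scope ring_scope.

(* alpha_n^2 = max_j sum_i var(w_ij); for Bernoulli entries with mean H_ij,
   var(w_ij) = H_ij (1 - H_ij). *)
Definition alpha_sq (R : realType) (n : nat) (H : 'M[R]_n) : R :=
  \big[Num.max/0]_(j < n) \sum_(i < n) H i j * (1 - H i j).

(* "lambda_K(A) >= c" for a K x K (symmetric) matrix A: its K-th largest,
   i.e. smallest, eigenvalue is at least c: every eigenvalue of A is >= c. *)
Definition lamK_ge (R : realType) (K : nat) (A : 'M[R]_K) (c : R) : Prop :=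
  forall a : R, eigenvalue A a -> c <= a.

Definition membership (R : realType) (n K : nat) (Pi : 'M[R]_(n, K)) : Prop :=
  (forall i k, 0 <= Pi i k) /\ (forall i, \sum_(k < K) Pi i k = 1).

Definition connectivity (R : realType) (K : nat) (P : 'M[R]_K) : Prop :=
  P^T = P /\ (forall k l, 0 <= P k l <= 1).

Definition prob_matrix (R : realType) (n : nat) (H : 'M[R]_n) : Prop :=
  H^T = H /\ (forall i j, 0 <= H i j <= 1).

Definition eigdecomp (R : realType) (n K : nat) (H : 'M[R]_n)
    (V : 'M[R]_(n, K)) (d : 'rV[R]_K) : Prop :=
  V^T *m V = 1%:M /\ H = V *m diag_mx d *m V^T /\
  (forall k : 'I_K, d 0 k != 0) /\
  (forall k l : 'I_K, (k <= l)%N -> `|d 0 l| <= `|d 0 k|).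

Definition theta_max (R : realType) (n : nat) (theta : 'I_n -> R) : R :=
  \big[Num.max/0]_(i < n) theta i.

Definition theta_min (R : realType) (n : nat) (theta : 'I_n -> R) : R :=
  \big[Num.min/theta_max theta]_(i < n) theta i.

Definition pure_nodes (R : realType) (n K : nat) (Pi : 'M[R]_(n, K)) (k : 'I_K)
  : {set 'I_n} := [set i | Pi i k == 1].

(* Main.v *)
Require Import Defs.
From HB Require Import structures.
From mathcomp Require Import all_boot all_order all_algebra.
From mathcomp Require Import all_classical all_reals all_analysis.
From mathcomp Require Import lra ring.
Import Order.TTheory GRing.Theory Num.Theory.
Import numFieldNormedType.Exports.
Local Open Scope ring_scope.
Set Implicit Arguments. Unset Strict Implicit. Unset Printing Implicit Defensive.

Section Dot.
Variable R : realType.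

Definition dotv m (x y : 'rV[R]_m) : R := (x *m y^T) 0 0.

Lemma dotvE m (x y : 'rV[R]_m) : dotv x y = \sum_i x 0 i * y 0 i.
Proof. by rewrite /dotv !mxE; apply: eq_bigr => i _; rewrite mxE. Qed.

Lemma dotvC m (x y : 'rV[R]_m) : dotv x y = dotv y x.
Proof. by rewrite !dotvE; apply: eq_bigr => i _; rewrite mulrC. Qed.

Lemma dotv_ge0 m (x : 'rV[R]_m) : 0 <= dotv x x.
Proof. by rewrite dotvE; apply: sumr_ge0 => i _; rewrite -expr2 sqr_ge0. Qed.

Lemma dotv_eq0 m (x : 'rV[R]_m) : dotv x x = 0 -> x = 0.
Proof.
rewrite dotvE => /eqP; rewrite psumr_eq0; last by move=> i _; rewrite -expr2 sqr_ge0.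
move=> /allP H; apply/rowP => i; rewrite mxE.
have := H i (mem_index_enum _); rewrite /= -expr2 sqrf_eq0 => /eqP //.
Qed.

Lemma dotv_gt0 m (x : 'rV[R]_m) : x != 0 -> 0 < dotv x x.
Proof.
move=> x0; rewrite lt_neqAle dotv_ge0 andbT; apply/eqP => /esym /dotv_eq0.
by move/eqP: x0.
Qed.

Lemma dotvDl m (x y z : 'rV[R]_m) : dotv (x + y) z = dotv x z + dotv y z.
Proof. by rewrite /dotv mulmxDl mxE. Qed.
Lemma dotvZl m a (x z : 'rV[R]_m) : dotv (a *: x) z = a * dotv x z.
Proof. by rewrite /dotv -scalemxAl mxE. Qed.
Lemma dotvDr m (x y z : 'rV[R]_m) : dotv z (x + y) = dotv z x + dotv z y.
Proof. by rewrite dotvC dotvDl !(dotvC z). Qed.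
Lemma dotvZr m a (x z : 'rV[R]_m) : dotv z (a *: x) = a * dotv z x.
Proof. by rewrite dotvC dotvZl dotvC. Qed.

Definition bform m (B : 'M[R]_m) (x y : 'rV[R]_m) := dotv (x *m B) y.

Lemma bformC m (B : 'M[R]_m) x y : B^T = B -> bform B x y = bform B y x.
Proof.
move=> sB; rewrite /bform /dotv.
transitivity ((y *m B *m x^T)^T 0 0); last by rewrite mxE.
by rewrite !trmx_mul trmxK sB mulmxA.
Qed.

Lemma bformDl m (B : 'M[R]_m) x y z : bform B (x + y) z = bform B x z + bform B y z.
Proof. by rewrite /bform mulmxDl dotvDl. Qed.
Lemma bformZl m (B : 'M[R]_m) a x z : bform B (a *: x) z = a * bform B x z.
Proof. by rewrite /bform -scalemxAl dotvZl. Qed.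
Lemma bformDr m (B : 'M[R]_m) x y z : bform B z (x + y) = bform B z x + bform B z y.
Proof. by rewrite /bform dotvDr. Qed.
Lemma bformZr m (B : 'M[R]_m) a x z : bform B z (a *: x) = a * bform B z x.
Proof. by rewrite /bform dotvZr. Qed.

Lemma bformE m (B : 'M[R]_m) x y :
  bform B x y = \sum_i \sum_j x 0 j * B j i * y 0 i.
Proof.
rewrite /bform dotvE; apply: eq_bigr => i _; rewrite mxE big_distrl /=.
by apply: eq_bigr => j _.
Qed.


Lemma dotv_delta m (x : 'rV[R]_m) j : dotv x (delta_mx 0 j) = x 0 j.
Proof.
rewrite dotvE (bigD1 j) //= mxE !eqxx mulr1 big1 ?addr0 // => k /negPf nk.
by rewrite mxE nk andbF mulr0.
Qed.

Lemma dotv00 m : dotv (0 : 'rV[R]_m) 0 = 0.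
Proof. by rewrite -(scale0r (0 : 'rV[R]_m)) dotvZl mul0r. Qed.

Lemma bform00 m (B : 'M[R]_m) : bform B 0 0 = 0.
Proof. by rewrite -(scale0r (0 : 'rV[R]_m)) bformZl mul0r. Qed.

Lemma bform_cont m (C : 'M[R]_m) : continuous (fun v : 'rV[R]_m => bform C v v).
Proof.
have -> : (fun v => bform C v v) = (fun v => \sum_i \sum_j v 0 j * C j i * v 0 i).
  by apply/funext => v; rewrite bformE.
apply: (@continuous_big _ _ +%R 0 xpredT add_continuous) => i _.
apply: (@continuous_big _ _ +%R 0 xpredT add_continuous) => j _.
move=> v.
apply: (continuousM (s := fun v : 'rV[R]_m => v 0 j * C j i) (t := fun v : 'rV[R]_m => v 0 i)); last exact: coord_continuous.
apply: (continuousM (s := fun v : 'rV[R]_m => v 0 j) (t := fun v : 'rV[R]_m => C j i)); first exact: coord_continuous.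
exact: cst_continuous.
Qed.

Lemma rayleigh K (B : 'M[R]_K) c : B^T = B -> lamK_ge B c ->
  forall x : 'rV[R]_K, c * dotv x x <= bform B x x.
Proof.
case: K B => [|K] B sB hl x.
  by rewrite [x]thinmx0 dotv00 bform00 mulr0.
pose S := [set v : 'rV[R]_K.+1 | dotv v v = 1]%classic.
have dotc : continuous (fun v : 'rV[R]_K.+1 => dotv v v).
  have -> : (fun v : 'rV[R]_K.+1 => dotv v v) = (fun v => bform 1%:M v v).
    by apply/funext => v; rewrite /bform mulmx1.
  exact: bform_cont.
have S0 : (S !=set0)%classic.
  exists (delta_mx 0 0); rewrite /S /= dotv_delta mxE !eqxx //.
have cS : closed S.
  by apply: (preimage_closed (f := fun v : 'rV[R]_K.+1 => dotv v v) (D := [set x | x = 1])); [move=> y _; exact: dotc | exact: closed_eq].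
have bS : bounded_set S.
  exists 1; split => // M M1 z Sz.
  rewrite /mkset /= [leLHS]/Num.norm /= mx_normrE; apply: bigmax_le => [|[i j] _] /=.
    by rewrite ltW // (lt_trans _ M1).
  rewrite [i]ord1.
  have h : z 0 j ^+ 2 <= 1.
    move: Sz; rewrite /S /= dotvE => <-.
    rewrite (bigD1 j) //= expr2 lerDl sumr_ge0 // => k _.
    by rewrite -expr2 sqr_ge0.
  have n0 := normr_ge0 (z 0 j).
  have e : `|z 0 j| ^+ 2 = z 0 j ^+ 2 by rewrite real_normK // num_real.
  rewrite -e in h; apply: ltW; apply: (le_lt_trans _ M1); nra.
have cpS : compact S by apply: bounded_closed_compact.
have [u Su umin] := EVT_min_rV S0 cpS (@continuous_subspaceT _ _ S _ (@bform_cont _ B)).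
move: Su; rewrite inE /S /= => Su.
pose m := bform B u u.
have key : forall y, m * dotv y y <= bform B y y.
  move=> y; have [->|y0] := eqVneq y 0; first by rewrite dotv00 bform00 mulr0.
  pose s := dotv y y; have s0 : 0 < s := dotv_gt0 y0.
  pose t := (Num.sqrt s)^-1.
  have t2 : t ^+ 2 = s^-1 by rewrite exprVn sqr_sqrtr // ltW.
  have Sy : S (t *: y).
    by rewrite /S /= dotvZl dotvZr mulrA -expr2 t2 mulVf // gt_eqF.
  have := umin (t *: y) (mem_set Sy); rewrite bformZl bformZr mulrA -expr2 t2.
  by rewrite -/m mulrC ler_pdivlMr.
have eig : u *m B = m *: u.
  apply/rowP => j; pose e : 'rV[R]_K.+1 := delta_mx 0 j.
  pose a := bform B u e - m * dotv u e.
  pose b := bform B e e - m * dotv e e.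
  have hb : 0 <= b by rewrite subr_ge0 key.
  have ht : forall t, 0 <= 2 * t * a + t ^+ 2 * b.
    move=> t; have := key (u + t *: e).
    rewrite !(bformDl, bformDr, bformZl, bformZr, dotvDl, dotvDr, dotvZl, dotvZr).
    rewrite (@bformC _ B e u sB) (dotvC e u) Su -/m -subr_ge0.
    have -> : 2 * t * a + t ^+ 2 * b = m + t * bform B u e + (t * bform B u e + t * (t * bform B e e)) -
      m * (1 + t * dotv u e + (t * dotv u e + t * (t * dotv e e))).
      by rewrite /a /b -/m; ring.
    by [].
  have a0 : a = 0.
    pose r := (b + 1)^-1.
    have r0 : 0 < r by rewrite invr_gt0; lra.
    have b1 : 0 < b + 1 by lra.
    have rb : r * b = 1 - r by rewrite /r; field; rewrite gt_eqF.
    have := ht (- a * r).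
    have -> : 2 * (- a * r) * a + (- a * r) ^+ 2 * b = - (a ^+ 2 * (r + r ^+ 2)).
      rewrite (_ : (- a * r) ^+ 2 * b = a ^+ 2 * r * (r * b)); last by ring.
      by rewrite rb; ring.
    rewrite oppr_ge0 => h.
    have : a ^+ 2 * (r + r ^+ 2) == 0.
      by rewrite eq_le h mulr_ge0 // ?sqr_ge0 // addr_ge0 ?sqr_ge0 // ltW.
    by rewrite mulf_eq0 sqrf_eq0 (gt_eqF (_ : 0 < r + r ^+ 2)) ?orbF => [/eqP//|]; rewrite ltr_pwDl // sqr_ge0.
  move: a0; rewrite /a /bform !dotv_delta => /eqP; rewrite subr_eq0 => /eqP ->.
  by rewrite mxE.
have u0 : u != 0 by apply/eqP => u0; move: Su; rewrite u0 dotv00 => /eqP; rewrite eq_sym oner_eq0.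
have cm : c <= m by apply: hl; apply/eigenvalueP; exists u.
apply: le_trans (key x); by rewrite ler_wpM2r // dotv_ge0.
Qed.

End Dot.

Section Lin.
Variable R : realType.

Lemma dotvMsym m (G : 'M[R]_m) x y : G^T = G -> dotv (x *m G) y = dotv x (y *m G).
Proof. by move=> sG; rewrite /dotv trmx_mul sG mulmxA. Qed.

Lemma bform_gram n K (B : 'M[R]_(n, K)) y :
  bform (B^T *m B) y y = dotv (y *m B^T) (y *m B^T).
Proof. by rewrite /bform /dotv trmx_mul trmxK !mulmxA. Qed.

Lemma core n K (B : 'M[R]_(n, K)) (M : 'M[R]_K) v d :
  v *m (B *m M *m B^T) = d *: v -> d != 0 ->
  exists y : 'rV[R]_K, y *m B^T = v /\
    y *m (B^T *m B) *m M *m (B^T *m B) = d *: (y *m (B^T *m B)).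
Proof.
move=> hv d0; exists (d^-1 *: (v *m B *m M)).
have E : v *m B *m M *m B^T = v *m (B *m M *m B^T) by rewrite !mulmxA.
have yv : d^-1 *: (v *m B *m M) *m B^T = v.
  by rewrite -scalemxAl E hv scalerA mulVf // scale1r.
split => //.
set y := d^-1 *: (v *m B *m M).
have -> : y *m (B^T *m B) *m M *m (B^T *m B) = (y *m B^T) *m (B *m M *m B^T) *m B.
  by rewrite !mulmxA.
by rewrite yv hv -scalemxAl -yv mulmxA.
Qed.

Lemma eig_of_decomp n K (H : 'M[R]_n) V (d : 'rV[R]_K) k :
  eigdecomp H V d ->
  row k V^T *m H = d 0 k *: row k V^T /\ dotv (row k V^T) (row k V^T) = 1.
Proof.
case=> hV [hH _]; split.
  rewrite -row_mul hH !mulmxA hV mul1mx mul_diag_mx.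
  by apply/rowP => j; rewrite !mxE.
rewrite /dotv tr_row trmxK.
transitivity ((V^T *m V) k k); last by rewrite hV mxE eqxx.
by rewrite !mxE; apply: eq_bigr => i _; rewrite !mxE.
Qed.

Lemma nonzero_of_dot m (v : 'rV[R]_m) : dotv v v = 1 -> v != 0.
Proof. by move=> h; apply/eqP => v0; move: h; rewrite v0 dotv00 => /eqP; rewrite eq_sym oner_eq0. Qed.

Lemma eig_upper n (H : 'M[R]_n) b (v : 'rV[R]_n) d :
  (forall i j, 0 <= H i j <= b) -> v != 0 -> v *m H = d *: v -> `|d| <= n%:R * b.
Proof.
move=> hH v0 hv.
have [j0 hj0] : exists j, v 0 j != 0.
  case/boolP: [exists j, v 0 j != 0] => [/existsP//|/existsPn h].
  move/eqP: v0 => [] ; apply/rowP => j; rewrite mxE; have := h j; by rewrite negbK => /eqP.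
case: (@arg_maxP _ _ _ j0 xpredT (fun j => `|v 0 j|) isT) => jm _ hm.
set M := `|v 0 jm|.
have M0 : 0 < M by apply: lt_le_trans (hm j0 isT); rewrite normr_gt0.
have e : d * v 0 jm = \sum_i v 0 i * H i jm.
  by have := congr1 (fun A : 'rV[R]_n => A 0 jm) hv; rewrite !mxE => <-.
have : `|d| * M <= M * (n%:R * b).
  rewrite -normrM e; apply: le_trans (ler_norm_sum _ _ _) _.
  apply: le_trans (_ : _ <= \sum_(i < n) M * b) _.
    apply: ler_sum => i _; have := hH i jm => /andP[h1 h2].
    rewrite normrM (ger0_norm h1); apply: ler_pM => //; exact: (hm i isT).
  rewrite sumr_const card_ord -(mulr_natl (M * b)); nra.
by rewrite mulrC ler_pM2l.
Qed.

Lemma alpha_upper n (H : 'M[R]_n) b : 0 <= b ->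
  (forall i j, 0 <= H i j <= b) -> alpha_sq H <= n%:R * b.
Proof.
move=> b0 hH; rewrite /alpha_sq; apply: bigmax_le => [|j _]; first by rewrite mulr_ge0 ?ler0n.
apply: le_trans (_ : _ <= \sum_(i < n) b) _.
  by apply: ler_sum => i _; have := hH i j => /andP[h1 h2]; nra.
by rewrite sumr_const card_ord -(mulr_natl b).
Qed.

Lemma entry_bound n K (Pi : 'M[R]_(n, K)) (P : 'M[R]_K) :
  membership Pi -> connectivity P -> forall i j, 0 <= (Pi *m P *m Pi^T) i j <= 1.
Proof.
case=> hP0 hP1 [_ hC] i j; rewrite !mxE; apply/andP; split.
  apply: sumr_ge0 => l _; rewrite !mxE; apply: mulr_ge0 => //.
  apply: sumr_ge0 => k _; apply: mulr_ge0 => //; by case/andP: (hC k l).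
apply: le_trans (_ : _ <= \sum_(l < K) (\sum_(k < K) Pi i k) * Pi j l) _.
  apply: ler_sum => l _; rewrite !mxE; apply: ler_wpM2r => //.
  apply: ler_sum => k _; apply: ler_piMr => //; by case/andP: (hC k l).
rewrite hP1 (eq_bigr (fun l => Pi j l)) ?hP1 // => l _; exact: mul1r.
Qed.

End Lin.

Section M.
Variable R : realType.

Lemma lower1 n K (Pi : 'M[R]_(n,K)) (P : 'M[R]_K) th v d p a :
  P^T = P -> 0 < a -> 0 < p -> 0 < th ->
  (forall x, a * dotv x x <= bform (Pi^T *m Pi) x x) ->
  (forall x, p * dotv x x <= bform P x x) ->
  v *m (th *: (Pi *m P *m Pi^T)) = d *: v -> d != 0 -> dotv v v = 1 ->
  th * p * a <= d.
Proof.
move=> sP a0 p0 t0 hG hP hv d0 v1.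
have hv' : v *m (Pi *m (th *: P) *m Pi^T) = d *: v.
  have -> : Pi *m (th *: P) *m Pi^T = th *: (Pi *m P *m Pi^T) by rewrite -scalemxAr -scalemxAl.
  exact: hv.
have [y [yv hy]] := core hv' d0.
set G := Pi^T *m Pi.
have sG : G^T = G by rewrite /G trmx_mul trmxK.
set w := y *m G.
have Q1 : dotv w y = 1 by rewrite /w -/(bform G y y) bform_gram yv.
have e1 : th * bform P w w = d.
  have := congr1 (fun A : 'rV[R]_K => dotv A y) hy.
  rewrite /= dotvZl Q1 mulr1 => <-.
  by rewrite (dotvMsym _ _ sG) -/w -scalemxAr dotvZl.
have hw : a <= dotv w w.
  have ya : a * dotv y y <= 1 by have := hG y; rewrite -/G /bform -/w Q1.
  have := dotv_ge0 (w + (-a) *: y).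
  rewrite dotvDl !dotvDr !dotvZl !dotvZr (dotvC y w) Q1.
  nra.
have hPw := hP w.
rewrite -e1 -mulrA ler_pM2l //.
apply: le_trans hPw; by rewrite ler_pM2l.
Qed.

Lemma lower2 n K (B : 'M[R]_(n,K)) (P : 'M[R]_K) v d g C :
  P \in unitmx ->
  (forall x, g * dotv x x <= bform (B^T *m B) x x) ->
  (forall x, `|bform (invmx P) x x| <= C * dotv x x) ->
  v *m (B *m P *m B^T) = d *: v -> d != 0 -> dotv v v = 1 ->
  g <= C * `|d|.
Proof.
move=> uP hG hC hv d0 v1.
have [y [yv hy]] := core hv d0.
set G := B^T *m B.
set w := y *m G.
set u := w *m P.
have wu : w = u *m invmx P by rewrite /u mulmxK.
have Q1 : dotv w y = 1 by rewrite /w -/(bform G y y) bform_gram yv.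
have w0 : w != 0.
  apply/eqP => w0; move: Q1; rewrite w0 -(scale0r (0:'rV[R]_K)) dotvZl mul0r.
  by move/eqP; rewrite eq_sym oner_eq0.
have u0 : u != 0 by apply/eqP => u0; move/eqP: w0; apply; rewrite wu u0 mul0mx.
have key : bform G u u = d * bform (invmx P) u u.
  by rewrite /bform hy dotvZl -wu.
have h1 := hG u; rewrite key in h1.
have h2 := hC u.
have du : 0 < dotv u u := dotv_gt0 u0.
have : g * dotv u u <= C * `|d| * dotv u u.
  apply: le_trans h1 _; apply: le_trans (ler_norm _) _.
  rewrite normrM [C * _]mulrC -mulrA ler_wpM2l //.
by rewrite ler_pM2r.
Qed.

Lemma sq_le_dot m (x : 'rV[R]_m) i : x 0 i * x 0 i <= dotv x x.
Proof.
rewrite dotvE (bigD1 i) //= lerDl sumr_ge0 // => k _; by rewrite -expr2 sqr_ge0.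
Qed.

Lemma inv_bound K (Q : 'M[R]_K) x :
  `|bform Q x x| <= (\sum_i \sum_j `|Q i j|) * dotv x x.
Proof.
rewrite bformE exchange_big /= big_distrl /=.
apply: le_trans (ler_norm_sum _ _ _) _; apply: ler_sum => i _.
rewrite big_distrl /=.
apply: le_trans (ler_norm_sum _ _ _) _; apply: ler_sum => j _.
have hi := sq_le_dot x i; have hj := sq_le_dot x j.
have ei : `|x 0 i| * `|x 0 i| = x 0 i * x 0 i by rewrite -normrM ger0_norm // -expr2 sqr_ge0.
have ej : `|x 0 j| * `|x 0 j| = x 0 j * x 0 j by rewrite -normrM ger0_norm // -expr2 sqr_ge0.
have ai := normr_ge0 (x 0 i); have aj := normr_ge0 (x 0 j); have aq := normr_ge0 (Q i j).
rewrite !normrM.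
have : `|x 0 i| * `|x 0 j| <= dotv x x by nra.
move=> h; rewrite mulrC mulrA; rewrite [`|x 0 j| * _]mulrC.
by rewrite mulrC ler_wpM2l.
Qed.

Lemma pure_other n K (Pi : 'M[R]_(n,K)) i k l :
  membership Pi -> i \in pure_nodes Pi k -> l != k -> Pi i l = 0.
Proof.
case=> h0 h1; rewrite inE => /eqP hik hl.
have S0 : \sum_(l < K | l != k) Pi i l = 0.
  by move: (h1 i); rewrite (bigD1 k) //= hik; lra.
move/eqP: S0; rewrite psumr_eq0 => [/allP H|l' _]; last exact: h0.
by have /implyP := H l (mem_index_enum _); rewrite hl => /(_ isT) /eqP.
Qed.

Lemma dcmm_gram n K (Pi : 'M[R]_(n,K)) (th : 'I_n -> R) c tmin :
  membership Pi -> 0 <= tmin -> (forall i, tmin <= th i) ->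
  (forall k, c <= (#|pure_nodes Pi k|)%:R) ->
  forall x, c * tmin ^+ 2 * dotv x x <=
    bform ((diag_mx (\row_i th i) *m Pi)^T *m (diag_mx (\row_i th i) *m Pi)) x x.
Proof.
move=> hm t0 ht hN x.
rewrite bform_gram.
set z := x *m _^T.
have zE : forall i, z 0 i = th i * \sum_k x 0 k * Pi i k.
  move=> i; rewrite /z mul_diag_mx !mxE big_distrr; apply: eq_bigr => k _.
  by rewrite !mxE /= mulrCA.
have pure : forall i k, i \in pure_nodes Pi k -> z 0 i = th i * x 0 k.
  move=> i k hik; rewrite zE (bigD1 k) //=.
  move: (hik); rewrite inE => /eqP ->; rewrite mulr1 big1 ?addr0 // => l hl.
  by rewrite (pure_other hm hik hl) mulr0.
rewrite dotvE big_distrr /= [dotv z z]dotvE.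
apply: le_trans (_ : _ <= \sum_k \sum_(i in pure_nodes Pi k) z 0 i * z 0 i) _.
  apply: ler_sum => k _.
  apply: le_trans (_ : _ <= \sum_(i in pure_nodes Pi k) tmin ^+ 2 * (x 0 k * x 0 k)) _.
    rewrite sumr_const -mulr_natr.
    have q0 : 0 <= tmin ^+ 2 * (x 0 k * x 0 k) by rewrite mulr_ge0 // ?sqr_ge0 // -expr2 sqr_ge0.
    have := hN k; nra.
  apply: ler_sum => i hi; rewrite (pure i k hi).
  have h : tmin ^+ 2 <= th i ^+ 2.
    by rewrite lerXn2r // ?nnegrE // (le_trans t0 (ht i)).
  rewrite (_ : th i * x 0 k * (th i * x 0 k) = th i ^+ 2 * (x 0 k * x 0 k)); last by rewrite expr2 mulrACA.
  by rewrite ler_wpM2r // -expr2 sqr_ge0.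
rewrite (eq_bigr (fun k => \sum_i (if i \in pure_nodes Pi k then z 0 i * z 0 i else 0))); last first.
  by move=> k _; rewrite big_mkcond.
rewrite exchange_big; apply: ler_sum => i _ /=.
case: (pickP (fun k => i \in pure_nodes Pi k)) => [k hk | none].
  rewrite (bigD1 k) //= hk big1 ?addr0 // => l hl; case: ifP => // hil.
  have hlk : k != l by rewrite eq_sym.
  have := pure_other hm hil hlk.
  by move: hk; rewrite inE => /eqP -> /eqP; rewrite oner_eq0.
rewrite big1 => [|k _]; last by rewrite none.
by rewrite -expr2 sqr_ge0.
Qed.

End M.

Unset Implicit Arguments. Set Strict Implicit.

Theorem lemma8 (R : realType) :
  (* Mixed membership model H = theta Pi P Pi^T *)
  (forall (K : nat) (c0 c1 : R), (0 < K)%N ->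
    0 < c0 < 1 -> 0 < c1 < 1 ->
    exists Clo Chi : R, 0 < Clo /\ 0 < Chi /\
    exists N : nat, forall (n : nat), (N <= n)%N ->
    forall (Pi : 'M[R]_(n, K)) (P : 'M[R]_K) (theta : R)
           (V : 'M[R]_(n, K)) (d : 'rV[R]_K),
      membership Pi -> connectivity P -> \det P != 0 -> 0 < theta ->
      let H := theta *: (Pi *m P *m Pi^T) in
      prob_matrix H ->
      lamK_ge (Pi^T *m Pi) (c0 * n%:R) ->
      lamK_ge P c0 ->
      (n%:R) `^ (- c1) <= theta ->
      eigdecomp H V d ->
      alpha_sq H <= n%:R * theta /\
      (forall k : 'I_K, Clo * (n%:R * theta) <= `|d 0 k| <= Chi * (n%:R * theta)))
  /\
  (* Degree-corrected mixed membership model H = Theta Pi P Pi^T Theta *)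
  (forall (K : nat) (P : 'M[R]_K) (c2 c3 c4 : R), (0 < K)%N ->
    connectivity P -> \det P != 0 ->
    0 < c2 < 1 -> 0 < c3 < 1 -> 0 < c4 ->
    exists Clo Chi : R, 0 < Clo /\ 0 < Chi /\
    exists N : nat, forall (n : nat), (N <= n)%N ->
    forall (Pi : 'M[R]_(n, K)) (theta : 'I_n -> R)
           (V : 'M[R]_(n, K)) (d : 'rV[R]_K),
      membership Pi -> (forall i, 0 < theta i) ->
      let Theta := diag_mx (\row_i theta i) in
      let H := Theta *m Pi *m P *m Pi^T *m Theta in
      prob_matrix H ->
      (forall k : 'I_K, c2 * n%:R <= (#|pure_nodes Pi k|)%:R) ->
      theta_max theta <= c4 * theta_min theta ->
      (n%:R) `^ (- c3) <= theta_min theta ^+ 2 ->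
      eigdecomp H V d ->
      alpha_sq H <= n%:R * theta_max theta ^+ 2 /\
      (forall k : 'I_K, Clo * (n%:R * theta_max theta ^+ 2) <= `|d 0 k|
                        <= Chi * (n%:R * theta_max theta ^+ 2))).
Proof.
split.
  move=> K c0 c1 K0 /andP[c00 c01] _.
  exists (c0 * c0), 1; split; first exact: mulr_gt0.
  split; first exact: ltr01.
  exists 1%N => n n1 Pi P theta V d hm hc hdet t0 H hp hG hP _ hed.
  have hb : forall i j, 0 <= H i j <= theta.
    move=> i j; rewrite /H mxE; have /andP[h1 h2] := entry_bound hm hc i j.
    by apply/andP; split; [exact: mulr_ge0 (ltW t0) h1 | exact: ler_piMr (ltW t0) h2].
  split; first by apply: alpha_upper => //; exact: ltW.
  move=> k; have [ev v1] := eig_of_decomp k hed.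
  have d0 : d 0 k != 0 by case: hed => _ [_ [h _]]; exact: h.
  have v0 := nonzero_of_dot v1.
  rewrite mul1r; apply/andP; split; last exact: eig_upper hb v0 ev.
  case: (hc) => sP _.
  have sG : (Pi^T *m Pi)^T = Pi^T *m Pi by rewrite trmx_mul trmxK.
  have n0 : 0 < n%:R :> R by rewrite ltr0n.
  have hlow := lower1 sP (mulr_gt0 c00 n0) c00 t0 (rayleigh sG hG) (rayleigh sP hP) ev d0 v1.
  rewrite (_ : c0 * c0 * (n%:R * theta) = theta * c0 * (c0 * n%:R)); last by ring.
  exact: le_trans hlow (ler_norm _).
move=> K P c2 c3 c4 K0 hc hdet /andP[c20 _] _ c40.
pose C := \sum_i \sum_j `|invmx P i j| + 1.
have C0 : 0 < C.
  by rewrite /C ltr_pwDr // sumr_ge0 // => i _; rewrite sumr_ge0.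
exists (c2 / (C * c4 ^+ 2)), 1; split; first by rewrite divr_gt0 // mulr_gt0 // exprn_gt0.
split; first exact: ltr01.
exists 1%N => n n1 Pi theta V d hm ht Theta H hp hN hmax _ hed.
set tM := theta_max theta in hmax *.
set tm := theta_min theta in hmax *.
have htM : forall i, theta i <= tM by move=> i; exact: le_bigmax.
have htm : forall i, tm <= theta i by move=> i; exact: bigmin_le.
have tM0 : 0 <= tM.
  rewrite /tM /theta_max; elim/big_ind: _ => // [x y hx hy | i _].
    by rewrite le_max hx.
  exact: ltW.
have tm0 : 0 <= tm.
  have : 0 <= c4 * tm by exact: le_trans hmax.
  by rewrite pmulr_rge0.
have hb : forall i j, 0 <= H i j <= tM ^+ 2.
  move=> i j.
  have -> : H = Theta *m (Pi *m P *m Pi^T) *m Theta by rewrite /H !mulmxA.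
  have /andP[h1 h2] := entry_bound hm hc i j.
  move: h1 h2; set A := Pi *m P *m Pi^T => h1 h2; clearbody A.
  rewrite /Theta mul_mx_diag mul_diag_mx !mxE.
  have ti := ltW (ht i); have tj := ltW (ht j).
  rewrite mulr_ge0 ?mulr_ge0 //=.
  rewrite expr2; apply: ler_pM; rewrite ?mulr_ge0 //.
  by rewrite -[tM]mulr1; apply: ler_pM.
split; first by apply: alpha_upper => //; rewrite sqr_ge0.
move=> k; have [ev v1] := eig_of_decomp k hed.
have d0 : d 0 k != 0 by case: hed => _ [_ [h _]]; exact: h.
have v0 := nonzero_of_dot v1.
rewrite mul1r; apply/andP; split; last exact: eig_upper hb v0 ev.
pose B := Theta *m Pi.
have eH : H = B *m P *m B^T by rewrite /H /B trmx_mul tr_diag_mx !mulmxA.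
have ev' : row k V^T *m (B *m P *m B^T) = d 0 k *: row k V^T by rewrite -eH.
have uP : P \in unitmx by rewrite unitmxE unitfE.
have hGram := dcmm_gram hm tm0 htm hN.
have hCb : forall x, `|bform (invmx P) x x| <= C * dotv x x.
  move=> x; apply: le_trans (inv_bound (invmx P) x) _.
  by rewrite ler_wpM2r ?dotv_ge0 // /C lerDl.
have hlow := lower2 uP hGram hCb ev' d0 v1.
have hsq : tM ^+ 2 <= c4 ^+ 2 * tm ^+ 2.
  by rewrite -exprMn lerXn2r // ?nnegrE // mulr_ge0 // ltW.
have c4s : 0 < c4 ^+ 2 by rewrite exprn_gt0.
rewrite mulrAC ler_pdivrMr ?mulr_gt0 //.
set a := c2 * n%:R.
have a0 : 0 <= a by rewrite /a mulr_ge0 // ?ltW.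
have e1 : c2 * (n%:R * tM ^+ 2) = a * tM ^+ 2 by rewrite /a mulrA.
rewrite e1.
have p1 : a * tM ^+ 2 <= a * (c4 ^+ 2 * tm ^+ 2) by rewrite ler_wpM2l.
have p2 : c4 ^+ 2 * (a * tm ^+ 2) <= c4 ^+ 2 * (C * `|d 0 k|).
  by rewrite ler_wpM2l // ltW.
apply: le_trans p1 _.
rewrite (_ : a * (c4 ^+ 2 * tm ^+ 2) = c4 ^+ 2 * (a * tm ^+ 2)); last by ring.
apply: le_trans p2 _.
by rewrite (_ : c4 ^+ 2 * (C * `|d 0 k|) = `|d 0 k| * (C * c4 ^+ 2)); last by ring.
Qed.
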